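(* Let $n\ge 3$. The wheel $W_n$ is H--cordial if and only if $n$ is odd.
   Context: The wheel $W_n$ has vertex set $\{v_0,v_1,\dots,v_n\}$ and edges $v_0v_i$ for $1\le i\le n$ together with the cycle edges $v_iv_{i+1}$ for $1\le i\le n$ (indices with $v_{n+1}=v_1$); so $v_0$ has degree $n$. A labeling of a graph $G$ is a map $f:E(G)\to\{-1,+1\}$; for each vertex $v$ set $f(v)=\sum_{e\in I(v)} f(e)$, where $I(v)$ is the set of edges incident to $v$. For an integer $c$, $e_f(c)$ is the number of edges with label $c$ and $v_f(c)$ the number of vertices $v$ with $f(v)=c$. A labeling $f$ is H--cordial if there is a positive constant $K$ such that $|f(v)|=K$ for every vertex $v$, $|e_f(1)-e_f(-1)|\le 1$, and $|v_f(K)-v_f(-K)|\le 1$. A graph is H--cordial if it admits an H--cordial labeling. *)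

(* Defs.v *)
From mathcomp Require Import all_boot all_order all_algebra.
Set Implicit Arguments. Unset Strict Implicit. Unset Printing Implicit Defensive.
Import Order.TTheory GRing.Theory Num.Theory.
Local Open Scope ring_scope.

(* A simple graph on a finite vertex type V is given by an adjacency relation
   (assumed symmetric and irreflexive); its edges are the 2-element sets {x,y}
   with adj x y. *)
Definition edges (V : finType) (adj : rel V) : {set {set V}} :=
  [set [set x; y] | x in V, y in V & adj x y].

(* A labeling assigns -1 or +1 to each edge (values off the edge set are irrelevant). *)
Definition is_labeling (V : finType) (adj : rel V) (f : {set V} -> int) : Prop :=
  forall e, e \in edges adj -> (f e == 1) || (f e == -1).

Definition vlab (V : finType) (adj : rel V) (f : {set V} -> int) (v : V) : int :=
  \sum_(e in edges adj | v \in e) f e.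

Definition e_count (V : finType) (adj : rel V) (f : {set V} -> int) (c : int) : nat :=
  #|[set e in edges adj | f e == c]|.
Definition v_count (V : finType) (adj : rel V) (f : {set V} -> int) (c : int) : nat :=
  #|[set v : V | vlab adj f v == c]|.

Definition H_cordial_labeling (V : finType) (adj : rel V) (f : {set V} -> int) : Prop :=
  is_labeling adj f /\
  exists K : int, 0 < K /\
    (forall v, `|vlab adj f v| = K) /\
    `|(e_count adj f 1)%:Z - (e_count adj f (-1))%:Z| <= 1 /\
    `|(v_count adj f K)%:Z - (v_count adj f (- K))%:Z| <= 1.

Definition H_cordial (V : finType) (adj : rel V) : Prop :=
  exists f, H_cordial_labeling adj f.

(* The wheel W_n on vertices 'I_(n+1): vertex 0 is the hub v_0, vertex i (1<=i<=n)
   is v_i.  Edges: v_0 v_i, and v_i v_(i+1) with v_(n+1) = v_1, i.e. i -- (i %% n).+1. *)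
Definition wheel_adj (n : nat) : rel 'I_n.+1 :=
  fun i j => [&& i != j &
     [|| (i == 0 :> nat), (j == 0 :> nat),
         (j == (i %% n).+1 :> nat) | (i == (j %% n).+1 :> nat)]].
Arguments wheel_adj n : clear implicits.

(* Main.v *)
Require Import Defs.
From mathcomp Require Import all_boot all_order all_algebra zify.
Set Implicit Arguments. Unset Strict Implicit. Unset Printing Implicit Defensive.
Import Order.TTheory GRing.Theory Num.Theory.
Local Open Scope ring_scope.

Lemma inSep (T : finType) (A : {set T}) (P : pred T) x :
  (x \in [set y in A | P y]) = (x \in A) && P x.
Proof. by rewrite inE. Qed.

Section Gen.
Variables (V : finType) (adj : rel V).
Hypothesis adj_sym : symmetric adj.
Hypothesis adj_irr : irreflexive adj.

Lemma mem_edges x y : adj x y -> [set x; y] \in edges adj.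
Proof. by move=> H; apply/imset2P; exists x y; rewrite ?inE ?H. Qed.

Lemma edgesP e : e \in edges adj -> exists x y, adj x y /\ e = [set x; y].
Proof. by case/imset2P => x y _; rewrite inE /= => Hy ->; exists x, y. Qed.

Lemma vlab_nbr (f : {set V} -> int) v :
  vlab adj f v = \sum_(w | adj v w) f [set v; w].
Proof.
have E0 : vlab adj f v = \sum_(e in [set e in edges adj | v \in e]) f e.
rewrite /vlab.
by apply: eq_bigl => e; rewrite inSep.
rewrite E0.
have -> : [set e in edges adj | v \in e] = (fun w => [set v; w]) @: [set w | adj v w].
apply/setP => e.
rewrite inSep.
apply/andP/imsetP.
case=> /edgesP [x [y [Hxy ->]]].
rewrite in_set2 => /orP [] /eqP ->.
by exists y; rewrite ?inE.
exists x; [by rewrite inE adj_sym | exact: setUC].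
case=> w Hw ->.
rewrite inE in Hw.
split; first exact: mem_edges.
by rewrite in_set2 eqxx.
rewrite big_imset /=.
by apply: eq_bigl => w; rewrite inE.
move=> w1 w2; rewrite !inE => H1 H2 Heq.
have : w1 \in [set v; w2] by rewrite -Heq !inE eqxx orbT.
rewrite !inE => /orP [] /eqP // E; by rewrite E adj_irr in H1.
Qed.
Lemma sum_vlab (f : {set V} -> int) :
  \sum_v vlab adj f v = 2%:R * \sum_(e in edges adj) f e.
Proof.
rewrite /vlab.
under eq_bigr do rewrite big_mkcondr.
rewrite exchange_big /= mulr_sumr; apply: eq_bigr => e He.
rewrite -big_mkcond /= sumr_const.
have [x [y [Hxy ->]]] := edgesP He.
rewrite cards2; have -> : (x != y) by apply/eqP => E; rewrite E adj_irr in Hxy.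
by rewrite mulr_natl.
Qed.

End Gen.

Lemma count_pm (T : finType) (A : {set T}) (g : T -> int) :
  (forall x, x \in A -> (g x == 1) || (g x == -1)) ->
  \sum_(x in A) g x = (#|[set x in A | g x == 1]|)%:Z - (#|[set x in A | g x == -1]|)%:Z.
Proof.
move=> Hg; rewrite (bigID (fun x => g x == 1)) /=.
have -> : \sum_(i in A | g i == 1) g i = \sum_(i in [set x in A | g x == 1]) 1.
  rewrite big_mkcond [RHS]big_mkcond; apply: eq_bigr => i _; rewrite !inE.
  case: (i \in A) => //=. by case: eqP.
have -> : \sum_(i in A | g i != 1) g i = \sum_(i in [set x in A | g x == -1]) (-1).
  rewrite big_mkcond [RHS]big_mkcond; apply: eq_bigr => i _; rewrite !inE.
  case Hi: (i \in A) => //=; move: (Hg i Hi); case: eqP => [->|] //= _ /eqP ->.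
  by [].

rewrite !sumr_const.

rewrite mulNrn !natz. done. Qed.

Section Wheel.
Variable n : nat.
Hypothesis Hn : (2 < n)%N.
Local Notation adj := (wheel_adj n).

Lemma wadj_sym : symmetric adj.
Proof.
move=> i j; rewrite /wheel_adj eq_sym; congr (_ && _).
by case: (i == 0 :> nat); case: (j == 0 :> nat); rewrite //= orbC.
Qed.

Lemma wadj_irr : irreflexive adj.
Proof. by move=> i; rewrite /wheel_adj eqxx. Qed.

Lemma modn_sm (x : nat) : (x < n.+1)%N -> (x %% n = if x == n then 0 else x)%N.
Proof.
move=> Hx; case: eqP => [->|H]; first by rewrite modnn.
by rewrite modn_small //; lia.
Qed.

Definition sv (v : 'I_n.+1) : 'I_n.+1 := inord (if v == n :> nat then 1 else v.+1).
Definition pv (v : 'I_n.+1) : 'I_n.+1 := inord (if v == 1 :> nat then n else v.-1).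

Lemma sv_val v : v != ord0 -> (sv v : nat) = if v == n :> nat then 1%N else v.+1.
Proof.
move=> Hv; rewrite /sv inordK //; have := ltn_ord v; case: eqP => //; lia. Qed.

Lemma pv_val v : v != ord0 -> (pv v : nat) = if v == 1 :> nat then n else v.-1.
Proof.
move=> Hv; rewrite /pv inordK //; have := ltn_ord v; case: eqP => //; lia.
Qed.

Lemma adj_hub w : adj ord0 w = (w != ord0).
Proof. by rewrite /wheel_adj eq_sym /= andbT. Qed.

Lemma adj_rim v w : v != ord0 -> adj v w = [|| w == ord0, w == sv v | w == pv v].
Proof.
move=> Hv; have Hv' : (v : nat) != 0%N by [].
have := ltn_ord v; have := ltn_ord w => Hw Hvn.
rewrite /wheel_adj -!val_eqE /= (sv_val Hv) (pv_val Hv) (modn_sm Hw) (modn_sm Hvn).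
case: (eqVneq (v:nat) n) => E1; case: (eqVneq (w:nat) n) => E2;
  case: (eqVneq (v:nat) 1) => E3 /=;
  apply/idP/idP; lia.
Qed.

Lemma sum_hub (F : 'I_n.+1 -> int) :
  \sum_(w | adj ord0 w) F w = \sum_(i < n) F (lift ord0 i).
Proof.
by rewrite (eq_bigl _ _ adj_hub) big_mkcond big_ord_recl /= add0r.
Qed.

Lemma rim_distinct v : v != ord0 ->
  [/\ sv v != ord0, pv v != ord0 & sv v != pv v].
Proof.
move=> Hv; have Hv' : (v : nat) != 0%N by [].
have := ltn_ord v => Hvn.
rewrite -!val_eqE /= (sv_val Hv) (pv_val Hv).
case: (eqVneq (v:nat) n) => E1; case: (eqVneq (v:nat) 1) => E3 /=; split; lia.
Qed.

Lemma sum_rim (F : 'I_n.+1 -> int) v : v != ord0 ->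
  \sum_(w | adj v w) F w = F ord0 + F (sv v) + F (pv v).
Proof.
move=> Hv; have [H1 H2 H3] := rim_distinct Hv.
rewrite (eq_bigl _ _ (fun w => adj_rim w Hv)) (bigD1 ord0) ?eqxx //=.
rewrite (bigD1 (sv v)) ?eqxx ?orbT ?H1 //=.
rewrite (bigD1 (pv v)) ?eqxx ?orbT ?H2 //= 1?eq_sym ?H3 //.
rewrite big1 ?addr0 ?addrA // => w.
by case: (w == ord0); case: (w == sv v); case: (w == pv v).
Qed.
End Wheel.

Lemma forall_set2 (T : finType) (a b : T) (P : pred T) :
  [forall x in [set a; b], P x] = P a && P b.
Proof.
apply/forall_inP/andP => [H|[Ha Hb] x].
  by split; apply: H; rewrite !inE eqxx ?orbT.
by rewrite !inE => /orP [] /eqP ->.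
Qed.

Section Odd.
Variable m : nat.
Hypothesis Hm : (0 < m)%N.
Local Notation N := (m.*2.+1).
Local Notation adj := (wheel_adj N).

Definition fo (e : {set 'I_N.+1}) : int :=
  if ord0 \in e then (if [forall x in e, (x <= m)%N] then 1 else -1)
  else (if [forall x in e, (x <= m.+1)%N] then -1 else 1).

Lemma fo_pm e : (fo e == 1) || (fo e == -1).
Proof. by rewrite /fo; case: ifP; case: ifP. Qed.

Lemma fo_hub w : fo [set ord0; w] = if (w <= m)%N then 1 else -1.
Proof. by rewrite /fo !inE eqxx /= forall_set2. Qed.

Lemma fo_hub' w : fo [set w; ord0] = if (w <= m)%N then 1 else -1.
Proof. by rewrite setUC fo_hub. Qed.

Lemma fo_rim v w : v != ord0 -> w != ord0 ->
  fo [set v; w] = if (v <= m.+1)%N && (w <= m.+1)%N then -1 else 1.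
Proof.
move=> Hv Hw; rewrite /fo !inE forall_set2 /=.
by rewrite !forall_set2 eq_sym (negbTE Hv) eq_sym (negbTE Hw).
Qed.

Definition g (v : nat) : int :=
  if v == 0%N then -1 else if v == 1%N then 1 else if (v <= m.+1)%N then -1 else 1.

Lemma hub_sum : \sum_(i < N) (if (i.+1 <= m)%N then 1 else -1 : int) = -1.
Proof.
rewrite -(big_mkord xpredT (fun i => if (i.+1 <= m)%N then 1 else -1 : int)).
have Hle : (m <= N)%N by lia.
rewrite (big_cat_nat (leq0n m) Hle) /=.
rewrite (eq_big_nat _ _ (F2 := fun _ => 1)); last by move=> i /andP [_ H]; rewrite H.
rewrite [X in _ + X](eq_big_nat _ _ (F2 := fun _ => -1)); last first.
  by move=> i /andP [H _]; case: ifP => //; lia.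
rewrite !sumr_const_nat mulNrn !natz; lia.
Qed.

Lemma vsum : \sum_(v < N.+1) g v = 0.
Proof.
rewrite -(big_mkord xpredT g) big_ltn // big_ltn //.
have Hle : (m.+2 <= N.+1)%N by lia.
have H2 : (2 <= m.+2)%N by lia.
rewrite (big_cat_nat H2 Hle) /=.
rewrite (eq_big_nat _ _ (F2 := fun _ => -1)); last first.
  by move=> i /andP [H H']; rewrite /g; do 2 (case: eqP; first lia); case: ifP => //; lia.
rewrite [\sum_(m.+2 <= i < _) _](eq_big_nat _ _ (F2 := fun _ => 1)); last first.
  by move=> i /andP [H H']; rewrite /g; do 2 (case: eqP; first lia); case: ifP => //; lia.
rewrite !sumr_const_nat mulNrn !natz /g /=; lia.
Qed.

Lemma vlab_fo v : vlab adj fo v = g v.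
Proof.
have HN : (2 < N)%N by lia.
rewrite (vlab_nbr (@wadj_sym N) (@wadj_irr N)).
case: (eqVneq v ord0) => [->|Hv].
  rewrite sum_hub.
  under eq_bigr do rewrite fo_hub lift0.
  by rewrite hub_sum.
have [H1 H2 H3] := rim_distinct HN Hv.
rewrite (sum_rim HN _ Hv) fo_hub' !fo_rim // (sv_val HN Hv) (pv_val HN Hv).
have := ltn_ord v; have Hv' : (v : nat) != 0%N by [].
move: Hv'; rewrite /g; case: (v : nat) => [|k] //= _ Hk.
rewrite !eqSS.
case: (eqVneq k m.*2) => E1; case: (eqVneq k 0) => E2 /=;
  repeat (case: ifP => ? /=); lia.
Qed.

End Odd.

Lemma parity k (h : 'I_k -> int) : (forall i, (h i == 1) || (h i == -1)) ->
  exists c : int, \sum_(i < k) h i = k%:Z - 2 * c.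
Proof.
elim: k h => [|k IH] h Hh; first by exists 0; rewrite big_ord0.
have [c Hc] := IH (fun i => h (widen_ord (leqnSn k) i)) (fun i => Hh _).
rewrite big_ord_recr /= Hc.
case/orP: (Hh ord_max) => /eqP ->; [exists c | exists (c + 1)]; lia.
Qed.


Lemma odd_cordial m : (0 < m)%N -> H_cordial (wheel_adj m.*2.+1).
Proof.
move=> Hm.
have Hs : \sum_v vlab (wheel_adj m.*2.+1) (@fo m) v = 0.
  by rewrite -[RHS](@vsum m Hm); apply: eq_bigr => v _; exact: vlab_fo.
have Hv : forall v, (vlab (wheel_adj m.*2.+1) (@fo m) v == 1) ||
                    (vlab (wheel_adj m.*2.+1) (@fo m) v == -1).
  by move=> v; rewrite vlab_fo // /g; repeat case: ifP => _.
exists (@fo m); split; first by move=> e _; exact: fo_pm.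
exists 1; split => //; split.
  by move=> v; case/orP: (Hv v) => /eqP ->.
split.
- have := count_pm (fun e (_ : e \in edges (wheel_adj m.*2.+1)) => @fo_pm m e).
  rewrite /e_count => <-.
  move: Hs; rewrite sum_vlab ?natz; [lia | exact: wadj_irr].
- have := count_pm (A := [set: 'I_(m.*2.+2)]) (fun v _ => Hv v).
  have -> : \sum_(x in [set: 'I_(m.*2.+2)]) vlab (wheel_adj m.*2.+1) (@fo m) x = 0.
    by rewrite -[RHS]Hs; apply: eq_bigl => x; rewrite inE.
  rewrite /v_count.
  have E : forall c, [set x in [set: 'I_(m.*2.+2)] | vlab (wheel_adj m.*2.+1) (@fo m) x == c]
                   = [set x | vlab (wheel_adj m.*2.+1) (@fo m) x == c].
    by move=> c; apply/setP => x; rewrite !inE.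
  rewrite !E => H; by rewrite -H.
Qed.

Lemma even_not n : (2 < n)%N -> H_cordial (wheel_adj n) -> odd n.
Proof.
move=> Hn [f [Hlab [K [HK [Habs _]]]]].
have Hpm : forall v w, wheel_adj n v w -> (f [set v; w] == 1) || (f [set v; w] == -1).
  by move=> v w H; apply: Hlab; apply: mem_edges.
have H0 := Habs ord0.
rewrite (vlab_nbr (@wadj_sym n) (@wadj_irr n)) sum_hub in H0.
have Hadj : forall i : 'I_n, wheel_adj n ord0 (lift ord0 i) by move=> i; rewrite adj_hub eq_sym neq_lift.
have [c Hc] := parity (h := fun i => f [set ord0; lift ord0 i]) (fun i => Hpm _ _ (Hadj i)).
rewrite Hc in H0.
pose v1 : 'I_n.+1 := inord 1.
have Hv1 : v1 != ord0 by rewrite -val_eqE /= inordK //; lia.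
have H1 := Habs v1.
rewrite (vlab_nbr (@wadj_sym n) (@wadj_irr n)) (sum_rim Hn _ Hv1) in H1.
have := Hpm v1 ord0; rewrite (adj_rim Hn) // eqxx => /(_ isT) /orP [] /eqP Ha;
have := Hpm v1 (sv v1); rewrite (adj_rim Hn) // eqxx orbT => /(_ isT) /orP [] /eqP Hb;
have := Hpm v1 (pv v1); rewrite (adj_rim Hn) // eqxx !orbT => /(_ isT) /orP [] /eqP Hc';
rewrite Ha Hb Hc' in H1;
apply/negPn/negP => Hev; have := odd_double_half n; rewrite (negbTE Hev) add0n => En;
lia.
Qed.

Theorem theorem4 (n : nat) : (3 <= n)%N -> (H_cordial (wheel_adj n) <-> ssrnat.odd n).
Proof.
move=> Hn; split; first exact: even_not.
move=> Ho; have En := odd_double_half n; rewrite Ho in En.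
rewrite -En /=; apply: odd_cordial; lia.
Qed.
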